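(* Let $X$ be a finite set with $|X|\ge 4$ and let $\tau$ be a non-empty thin subset of $\binom{X}{3}$. Then there exists an unrooted caterpillar tree $T$ with leaf set $X$ for which the map ${\rm med}_T:\tau\to \mathring{V}(T)$, $s\mapsto{\rm med}_T(s)$, is one-to-one.
   Context: $L(\tau)=\bigcup_{s\in\tau}s$; $\tau\subseteq\binom{X}{3}$ is thin if $|L(\tau')|\ge|\tau'|+2$ for every non-empty $\tau'\subseteq\tau$. An unrooted phylogenetic $X$-tree is a tree whose leaves (degree-1 vertices) are bijectively labelled by $X$ and whose non-leaf vertices are unlabelled of degree at least 3; it is binary if all non-leaf vertices have degree 3. $\mathring{V}(T)$ denotes the set of interior (non-leaf) vertices. A cherry is a pair of leaves adjacent to a common vertex. An unrooted caterpillar tree on $X$ is an unrooted binary phylogenetic $X$-tree with at most 2 cherries. For $s=\{x,y,z\}$, ${\rm med}_T(s)$ is the unique vertex of $T$ lying on all three paths between pairs of $x,y,z$. *)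

(* Defs.v *)
From mathcomp Require Import all_boot.
Set Implicit Arguments. Unset Strict Implicit. Unset Printing Implicit Defensive.

Definition Lset (X : finType) (tau : {set {set X}}) : {set X} :=
  \bigcup_(s in tau) s.

Definition triples (X : finType) (tau : {set {set X}}) : Prop :=
  forall s, s \in tau -> #|s| = 3.

Definition thin (X : finType) (tau : {set {set X}}) : Prop :=
  forall tau' : {set {set X}}, tau' \subset tau -> tau' != set0 ->
    #|tau'| + 2 <= #|Lset tau'|.

Definition simple_graph (V : finType) (e : rel V) : Prop :=
  symmetric e /\ irreflexive e.

Definition gconnected (V : finType) (e : rel V) : Prop :=
  forall x y : V, connect e x y.

Definition acyclic (V : finType) (e : rel V) : Prop :=
  forall c : seq V, 3 <= size c -> uniq c -> ~~ cycle e c.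

Definition is_tree (V : finType) (e : rel V) : Prop :=
  [/\ simple_graph e, gconnected e & acyclic e].

Definition deg (V : finType) (e : rel V) (v : V) : nat := #|[set w | e v w]|.

Definition is_leaf (V : finType) (e : rel V) (v : V) : bool := deg e v == 1.

Definition phylo_tree (X V : finType) (e : rel V) (lab : X -> V) : Prop :=
  [/\ is_tree e, injective lab,
      (forall v, is_leaf e v = [exists x, lab x == v]) &
      (forall v, ~~ is_leaf e v -> 3 <= deg e v)].

Definition binary_phylo_tree (X V : finType) (e : rel V) (lab : X -> V) : Prop :=
  phylo_tree e lab /\ (forall v, ~~ is_leaf e v -> deg e v = 3).

Definition cherries (V : finType) (e : rel V) : {set {set V}} :=
  [set C : {set V} | [exists a, exists b,
     [&& C == [set a; b], a != b, is_leaf e a, is_leaf e b &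
         [exists w, e a w && e b w]]]].

Definition caterpillar (X V : finType) (e : rel V) (lab : X -> V) : Prop :=
  binary_phylo_tree e lab /\ #|cherries e| <= 2.

Definition on_path (V : finType) (e : rel V) (x y v : V) : Prop :=
  exists p : seq V, [/\ path e x p, last x p = y, uniq (x :: p) & v \in x :: p].

Definition is_med (X V : finType) (e : rel V) (lab : X -> V) (s : {set X}) (v : V) : Prop :=
  forall x y, x \in s -> y \in s -> x != y -> on_path e (lab x) (lab y) v.

(* Main.v *)
Require Import Defs.
From mathcomp Require Import all_boot.
From mathcomp Require Import zify.
Set Implicit Arguments. Unset Strict Implicit. Unset Printing Implicit Defensive.

Section Comb.
Variables (X I : finType).
Implicit Types (F : I -> {set X}) (S J K A B : {set I}).

Definition LL F J : {set X} := \bigcup_(i in J) F i.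
Definition alltri F J : bool := [forall i in J, #|F i| == 3].
Definition Cond F S := (forall i, i \in S -> (#|F i| == 2) || (#|F i| == 3)) /\
  (forall J, J \subset S -> J != set0 -> #|J|.+1 + alltri F J <= #|LL F J|).
Definition tightb F J := (J != set0) && (#|LL F J| <= #|J|.+1).
Definition goodP F S x q := [/\ q \in S, #|F q| = 2, x \in F q &
   forall J, J \subset S -> tightb F J -> x \in LL F J -> q \in J].

Lemma LLU F A B : LL F (A :|: B) = LL F A :|: LL F B.
Proof. exact: bigcup_setU. Qed.
Lemma LLS F A B : A \subset B -> LL F A \subset LL F B.
Proof. move=> sAB; apply/bigcupsP => i iA; apply: (bigcup_sup _ (subsetP sAB i iA)). Qed.
Lemma LL1 F i : LL F [set i] = F i.
Proof. by rewrite /LL big_set1. Qed.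
Lemma LLin F J i x : i \in J -> x \in F i -> x \in LL F J.
Proof. move=> iJ xi; apply/bigcupP; by exists i. Qed.

Lemma Cond_sub F S A : Cond F S -> A \subset S -> Cond F A.
Proof.
case=> h1 h2 sA; split; first by move=> i iA; apply: h1; exact: (subsetP sA).
move=> J sJ nJ; apply: h2 => //; exact: subset_trans sJ sA.
Qed.

Lemma Cw F S J : Cond F S -> J \subset S -> J != set0 -> #|J|.+1 <= #|LL F J|.
Proof. case=> _ h sJ nJ; have := h J sJ nJ; lia. Qed.

Lemma union_tight F S K A y : Cond F S -> K \subset S -> A \subset S ->
  tightb F K -> tightb F A -> y \in LL F K -> y \in LL F A -> tightb F (K :|: A).
Proof.
move=> hC sK sA /andP[nK tK] /andP[nA tA] yK yA.
apply/andP; split; first by rewrite setU_eq0 (negbTE nK).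
rewrite LLU.
have h1 := cardsUI (LL F K) (LL F A).
have h2 := cardsUI K A.
suff : #|K :&: A|.+1 <= #|LL F K :&: LL F A| by lia.
case: (boolP (K :&: A == set0)) => [/eqP->|nB].
  by rewrite cards0; apply/card_gt0P; exists y; rewrite inE yK yA.
apply: leq_trans (Cw hC (subset_trans (subsetIl _ _) sK) nB) _.
apply: subset_leq_card; rewrite subsetI !LLS // ?subsetIl ?subsetIr //.
Qed.

Lemma tight_pair F S J : Cond F S -> J \subset S -> tightb F J ->
  exists2 i, i \in J & #|F i| = 2.
Proof.
move=> hC sJ /andP[nJ tJ]; case: (hC) => hs h; have := h J sJ nJ.
case: (boolP (alltri F J)) => [_|]; first by move=> H; lia.
move=> /forall_inPn [i iJ ni] _; exists i => //.
by case/orP: (hs i (subsetP sJ i iJ)) => /eqP h3 //; rewrite h3 in ni.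
Qed.

Lemma noP F S p A : Cond F S -> p \in S -> A \subset S -> p \notin A ->
  tightb F A -> F p \subset LL F A -> False.
Proof.
move=> hC pS sA pA /andP[nA tA] sp.
have sU : A :|: [set p] \subset S by rewrite subUset sA sub1set pS.
have nU : A :|: [set p] != set0 by rewrite setU_eq0 (negbTE nA).
have := Cw hC sU nU.
rewrite LLU LL1 (setUidPl sp) setUC cardsU1 pA /=; lia.
Qed.

Lemma lift F S p w A y q : Cond F S -> p \in S -> w \in F p -> A \subset S ->
  p \notin A -> tightb F A -> w \in LL F A ->
  (forall K, K \subset S -> tightb F K -> w \in LL F K -> p \notin K -> K \subset A) ->
  y \in LL F A -> y != w -> goodP F A y q -> goodP F S y q.
Proof.
move=> hC pS wp sA pA tA wA maxA yA yw [qA q2 yq gA].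
split => //; first exact: (subsetP sA).
move=> K sK tK yK.
case: (boolP (w \in LL F K)) => wK; last first.
  have pK : p \notin K by apply: contra wK => pK; apply: LLin pK wp.
  have tU := union_tight hC sK sA tK tA yK yA.
  have sU : K :|: A \subset A.
    apply: maxA; [by rewrite subUset sK sA | exact: tU |
      by rewrite LLU inE wA orbT | by rewrite !inE negb_or pK pA].
  have sKA : K \subset A := subset_trans (subsetUl K A) sU.
  exact: gA sKA tK yK.
move: tK tA => /andP[nK tK] /andP[nA tA].
have h1 := cardsUI (LL F K) (LL F A).
have h2 := cardsUI K A.
have nU : K :|: A != set0 by rewrite setU_eq0 (negbTE nK).
have sU : K :|: A \subset S by rewrite subUset sK sA.
have h3 := Cw hC sU nU.
rewrite LLU in h3.
have hI : #|LL F K :&: LL F A| <= #|K :&: A|.+1.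
  move: h1 h2 h3 tK tA; clear; lia.
case: (boolP (K :&: A == set0)) => [/eqP B0|nB].
  rewrite B0 cards0 in hI.
  have : #|[set y; w]| <= #|LL F K :&: LL F A|.
    by apply: subset_leq_card; apply/subsetP => z; rewrite !inE => /orP[]/eqP->;
      rewrite ?yK ?yA ?wK ?wA.
  by rewrite cards2 yw => H; move: H hI; clear; lia.
set B := K :&: A in hI nB *.
have sBA : B \subset A := subsetIr K A.
have hB := Cw hC (subset_trans sBA sA) nB.
have sLB : LL F B \subset LL F K :&: LL F A by rewrite subsetI !LLS // ?subsetIl ?subsetIr //.
have yB : y \in LL F B.
  apply: contraT => yB.
  have : #|y |: LL F B| <= #|LL F K :&: LL F A|.
    apply: subset_leq_card; rewrite subUset sLB sub1set inE yK yA //.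
  by rewrite cardsU1 yB => H; move: H hI hB; clear; lia.
have tB : tightb F B.
  by rewrite /tightb nB /=; apply: leq_trans (subset_leq_card sLB) hI.
have := gA B sBA tB yB; rewrite inE => /andP[] //.
Qed.


Lemma good2 F S : Cond F S -> (exists2 p, p \in S & #|F p| = 2) ->
  exists y1 y2 q1 q2, [/\ y1 != y2, goodP F S y1 q1 & goodP F S y2 q2].
Proof.
have [n] := ubnP #|S|; elim: n S => // n IH S ltS hC [p pS p2].
have side : forall w, w \in F p -> exists y q, goodP F S y q /\ (y = w \/
   exists A, [/\ A \subset S, p \notin A, tightb F A, w \in LL F A & y \in LL F A] /\
     (forall K, K \subset S -> tightb F K -> w \in LL F K -> p \notin K -> K \subset A)).
  move=> w wp.
  pose P := fun K : {set I} => [&& K \subset S, tightb F K, w \in LL F K & p \notin K].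
  case: (pickP P) => [K0 PK0 | noK]; last first.
    exists w, p; split; last by left.
    split => // J sJ tJ wJ; apply: contraT => pJ.
    by have := noK J; rewrite /P sJ tJ wJ pJ.
  case: (arg_maxnP (fun K => #|K|) PK0) => A PA maxcard.
  move: (PA) => /and4P [sA tA wA pA].
  have maxA : forall K, K \subset S -> tightb F K -> w \in LL F K -> p \notin K -> K \subset A.
    move=> K sK tK wK pK.
    have tU := union_tight hC sK sA tK tA wK wA.
    have PU : P (K :|: A) by rewrite /P subUset sK sA tU LLU inE wK /= !inE negb_or pK pA.
    have hc := maxcard _ PU.
    have e : A == K :|: A by rewrite eqEcard subsetUr; exact: hc.
    by rewrite (eqP e) subsetUl.
  have pAS : A \proper S by apply/properP; split => //; exists p.
  have ltA : #|A| < n by apply: leq_trans (proper_card pAS) _; rewrite -ltnS.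
  have [i iA i2] := tight_pair hC sA tA.
  have [y1 [y2 [q1 [q2 [y12 g1 g2]]]]] := IH A ltA (Cond_sub hC sA) (ex_intro2 _ _ i iA i2).
  have [y [q [yw gy]]] : exists y q, y != w /\ goodP F A y q.
    case: (boolP (y1 == w)) => [/eqP e1|n1]; last by exists y1, q1.
    by exists y2, q2; split => //; rewrite -e1 eq_sym.
  have yA : y \in LL F A by case: gy => qA _ yq _; apply: LLin qA yq.
  exists y, q; split; first exact: lift hC pS wp sA pA tA wA maxA yA yw gy.
  by right; exists A.
have [u [v [uv Fp]]] := cards2P _ (introT eqP p2 : #|F p| == 2).
have uF : u \in F p by rewrite Fp !inE eqxx.
have vF : v \in F p by rewrite Fp !inE eqxx orbT.
have [yu [qu [gu Hu]]] := side u uF.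
have [yv [qv [gv Hv]]] := side v vF.
exists yu, yv, qu, qv; split => //.
have subFp : forall A, u \in LL F A -> v \in LL F A -> F p \subset LL F A.
  by move=> A uA vA; rewrite Fp; apply/subsetP => z; rewrite !inE => /orP[]/eqP->.
apply/negP => /eqP e.
case: Hu => [eu|[Au [[sAu pAu tAu uAu yAu] mAu]]];
case: Hv => [ev|[Av [[sAv pAv tAv vAv yAv] mAv]]].
- by move: uv; rewrite -eu -ev e eqxx.
- by apply: (noP hC pS sAv pAv tAv); apply: subFp => //; rewrite -eu e.
- by apply: (noP hC pS sAu pAu tAu); apply: subFp => //; rewrite -ev -e.
- rewrite -e in yAv.
  have tU := union_tight hC sAu sAv tAu tAv yAu yAv.
  have sU : Au :|: Av \subset Au.
    apply: mAu; [by rewrite subUset sAu sAv | exact: tU |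
      by rewrite LLU inE uAu | by rewrite !inE negb_or pAu pAv].
  have vAu : v \in LL F Au.
    by apply: (subsetP (LLS F (subset_trans (subsetUr Au Av) sU))).
  exact: (noP hC pS sAu pAu tAu (subFp _ uAu vAu)).
Qed.

Lemma LLD F J x : LL (fun i => F i :\ x) J = LL F J :\ x.
Proof.
apply/setP => z; rewrite in_setD1; apply/idP/idP.
  case/bigcupP => i iJ; rewrite in_setD1 => /andP[zx zi]; rewrite zx /=; exact: (LLin iJ zi).
case/andP => zx /bigcupP [i iJ zi]; apply/bigcupP; exists i => //; by rewrite in_setD1 zx zi.
Qed.

Lemma reduce_C F S S' x : Cond F S -> S' \subset S ->
  (forall i, i \in S' -> x \in F i -> #|F i| = 3) ->
  (forall J, J \subset S' -> J != set0 -> x \in LL F J -> #|J|.+2 <= #|LL F J|) ->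
  Cond (fun i => F i :\ x) S'.
Proof.
move=> [hs hc] sS h3 h2; split.
  move=> i iS; have e := cardsD1 x (F i).
  case: (boolP (x \in F i)) => xi; [rewrite xi in e | rewrite (negbTE xi) in e].
    by rewrite (h3 i iS xi) in e; apply/orP; left; apply/eqP; move: e; clear; lia.
  by rewrite add0n in e; rewrite -e; apply: hs; apply: (subsetP sS).
move=> J sJ nJ; rewrite LLD.
have e := cardsD1 x (LL F J).
case: (boolP (x \in LL F J)) => xJ; [rewrite xJ in e | rewrite (negbTE xJ) in e].
  have := h2 J sJ nJ xJ.
  have -> : alltri (fun i => F i :\ x) J = false.
    apply/negbTE/forall_inPn; case/bigcupP: xJ => i iJ xi; exists i => //.
    have e2 := cardsD1 x (F i); rewrite xi (h3 i (subsetP sJ i iJ) xi) in e2.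
    by apply/eqP; move: e2; clear; lia.
  by move: e; clear; lia.
have ci : forall i, i \in J -> #|F i :\ x| = #|F i|.
  move=> i iJ; rewrite [in RHS](cardsD1 x) (_ : x \in F i = false) //.
  by apply/negbTE; apply: contra xJ; apply: LLin iJ.
have -> : alltri (fun i => F i :\ x) J = alltri F J.
  by apply: eq_forallb_in => i iJ; rewrite ci.
have e2 : #|LL F J :\ x| = #|LL F J| by rewrite e.
rewrite e2; exact: hc J (subset_trans sJ sS) nJ.
Qed.

Definition valid F S (r : X -> nat) (md : I -> X) :=
  (forall i, i \in S -> md i \in F i /\ #|[set w in F i | r w < r (md i)]| = 1) /\
  {in S &, injective md}.

Lemma valid0 (x0 : X) F : exists r : X -> nat, injective r /\ exists md : I -> X, valid F set0 r md.
Proof.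
exists (fun z => val (enum_rank z)); split; first by move=> a b /val_inj /enum_rank_inj.
by exists (fun _ => x0); split => // i; rewrite inE.
Qed.

Definition rext (r' : X -> nat) y := fun z => if z == y then (\max_(z0 : X) r' z0).+1 else r' z.

Lemma rext_inj r' y : injective r' -> injective (rext r' y).
Proof.
move=> ir a b; rewrite /rext.
have hm : forall z, r' z <= \max_(z0 : X) r' z0 := fun z => leq_bigmax z.
case: (eqVneq a y) => [->|ay]; case: (eqVneq b y) => [->|by_] //.
- by move=> e; have := hm b; rewrite -e ltnn.
- by move=> e; have := hm a; rewrite e ltnn.
- exact: ir.
Qed.

Lemma rext_count r' y (A : {set X}) m : m != y ->
  [set w in A | rext r' y w < rext r' y m] = [set w in A :\ y | r' w < r' m].
Proof.
move=> my; apply/setP => w; rewrite !inE /rext (negbTE my).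
case: (eqVneq w y) => [->|wy] //=.
by rewrite ltnNge (leq_trans (leq_bigmax m)) ?andbF.
Qed.

Lemma rext_top r' y (A : {set X}) :
  [set w in A | rext r' y w < rext r' y y] = A :\ y.
Proof.
apply/setP => w; rewrite !inE /rext eqxx.
case: (eqVneq w y) => [->|wy] //=; first by rewrite ltnn andbF.
by rewrite ltnS leq_bigmax andbT.
Qed.

Lemma ext_same F S y r' md' : injective r' -> valid (fun i => F i :\ y) S r' md' ->
  exists r : X -> nat, injective r /\ exists md : I -> X, valid F S r md.
Proof.
move=> ir [h1 h2]; exists (rext r' y); split; first exact: rext_inj.
exists md'; split => // i iS; have [m1 m2] := h1 i iS.
move: m1; rewrite in_setD1 => /andP[my mi]; split => //.
by rewrite rext_count.
Qed.

Lemma ext_pair F S q y r' md' : q \in S -> #|F q| = 2 -> y \in F q ->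
  injective r' -> valid (fun i => F i :\ y) (S :\ q) r' md' ->
  exists r : X -> nat, injective r /\ exists md : I -> X, valid F S r md.
Proof.
move=> qS q2 yq ir [h1 h2]; exists (rext r' y); split; first exact: rext_inj.
exists (fun i => if i == q then y else md' i); split.
  move=> i iS; case: (eqVneq i q) => [->|iq].
    split => //; rewrite rext_top; have := cardsD1 y (F q); rewrite yq q2.
    by move=> e; move: e; clear; lia.
  have iS' : i \in S :\ q by rewrite in_setD1 iq iS.
  have [m1 m2] := h1 i iS'.
  move: m1; rewrite in_setD1 => /andP[my mi]; split => //.
  by rewrite rext_count.
move=> i j iS jS /=.
case: (eqVneq i q) => [->|iq]; case: (eqVneq j q) => [->|jq] //.
- move=> e; have jS' : j \in S :\ q by rewrite in_setD1 jq jS.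
  by have [] := h1 j jS'; rewrite -e in_setD1 eqxx.
- move=> e; have iS' : i \in S :\ q by rewrite in_setD1 iq iS.
  by have [] := h1 i iS'; rewrite e in_setD1 eqxx.
- apply: h2; by rewrite in_setD1 ?iq ?jq.
Qed.

Lemma order_exists (x0 : X) N : forall F S, #|LL F S| <= N -> Cond F S ->
  exists r : X -> nat, injective r /\ exists md : I -> X, valid F S r md.
Proof.
elim: N => [|N IH] F S hN hC; case: (eqVneq S set0) => [-> | nS]; try exact: (valid0 x0 F).
  by have := Cw hC (subxx S) nS; move: hN; clear; lia.
have [y [S' [qS' sS' hC' lt ext]]] : exists y S', [/\ True, S' \subset S,
   Cond (fun i => F i :\ y) S', #|LL (fun i => F i :\ y) S'| <= N &
   forall r' md', injective r' -> valid (fun i => F i :\ y) S' r' md' ->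
     exists r : X -> nat, injective r /\ exists md : I -> X, valid F S r md].
  case: (hC) => hs hc.
  have meas : forall y, y \in LL F S -> forall S', S' \subset S ->
      #|LL (fun i => F i :\ y) S'| <= N.
    move=> y yS S' sS'; rewrite LLD.
    have := cardsD1 y (LL F S); rewrite yS.
    have : #|LL F S' :\ y| <= #|LL F S :\ y| by apply: subset_leq_card; apply: setSD; exact: LLS.
    by move: hN; clear; lia.
  case: (boolP [exists i in S, #|F i| == 2]) => [/exists_inP [p pS /eqP p2] | nop].
    have [y [y2 [q [q2' [_ gq _]]]]] := good2 hC (ex_intro2 _ _ p pS p2).
    case: (gq) => qS q2 yq gqJ.
    have yS : y \in LL F S := LLin qS yq.
    exists y, (S :\ q); split => //; first exact: subD1set.
    - apply: reduce_C hC (subD1set S q) _ _.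
        move=> i iS yi.
        case/orP: (hs i (subsetP (subD1set S q) i iS)) => /eqP // i2; exfalso.
        have t1 : tightb F [set i].
          by rewrite /tightb LL1 i2 cards1 andbT; apply/set0Pn; exists i; rewrite inE.
        have := gqJ [set i]; rewrite sub1set (subsetP (subD1set S q) i iS) LL1 => /(_ isT t1 yi).
        by rewrite inE => /eqP qi; move: iS; rewrite qi in_setD1 eqxx.
      move=> J sJ nJ yJ; rewrite ltnNge; apply/negP => h.
      have tJ : tightb F J by rewrite /tightb nJ.
      have := gqJ J (subset_trans sJ (subD1set S q)) tJ yJ => qJ.
      by have := subsetP sJ q qJ; rewrite in_setD1 eqxx.
    - exact: meas yS _ (subD1set S q).
    - move=> r' md' ir v; exact: ext_pair qS q2 yq ir v.
  have s3 : forall i, i \in S -> #|F i| = 3.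
    move=> i iS; case/orP: (hs i iS) => /eqP // i2.
    by have := negP nop; case; apply/exists_inP; exists i => //; rewrite i2.
  case/set0Pn: (nS) => i0 i0S.
  have : 0 < #|F i0| by rewrite s3.
  case/card_gt0P => y yi.
  have yS : y \in LL F S := LLin i0S yi.
  exists y, S; split => //.
  - apply: reduce_C hC (subxx S) (fun i iS _ => s3 i iS) _.
    move=> J sJ nJ yJ.
    have := hc J sJ nJ.
    have -> : alltri F J by apply/forall_inP => i iJ; rewrite s3 // (subsetP sJ).
    by rewrite addn1.
  - exact: meas yS _ (subxx S).
  - move=> r' md' ir v; exact: ext_same ir v.
have [r' [ir' [md' v']]] := IH _ _ lt hC'.
exact: ext r' md' ir' v'.
Qed.

End Comb.

Section Cat.
Variable k : nat.
Definition CV := ('I_(k.+4) + 'I_(k.+2))%type.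
Definition cl (i : nat) : nat := minn i.-1 k.+1.
Definition key (v : CV) : nat := match v with inl i => cl i | inr j => j end.
Definition ce (u w : CV) : bool :=
  match u, w with
  | inl i, inr j => cl i == j
  | inr j, inl i => cl i == j
  | inr j, inr j' => (j.+1 == j') || (j'.+1 == j)
  | _, _ => false
  end.
Definition isS (v : CV) (t : nat) : bool :=
  match v with inr j => nat_of_ord j == t | _ => false end.

Lemma ce_sym : symmetric ce.
Proof. by case=> a; case=> b //=; rewrite orbC. Qed.

Lemma ce_irr : irreflexive ce.
Proof. by case=> a //=; apply/negP; case/orP => /eqP; lia. Qed.

Lemma ce_key u w : ce u w ->
  key w = key u \/ (isS u (key u) /\ isS w (key w) /\ (key w = (key u).+1 \/ key u = (key w).+1)).
Proof.
case: u => a; case: w => b //=; try by move=> /eqP ->; left.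
by move=> h; right; rewrite !eqxx; split => //; split => //; case/orP: h => /eqP h; lia.
Qed.

Lemma isS_eq u w t : isS u t -> isS w t -> u = w.
Proof. by case: u => // a; case: w => // b /= /eqP ha /eqP hb; congr inr; apply: val_inj; rewrite /= ha hb. Qed.

Lemma up_avoid p : forall u K, path ce u p -> key u <= K ->
  (forall w, w \in p -> ~~ isS w K.+1) -> forall w, w \in p -> key w <= K.
Proof.
elim: p => // a p IH u K /= /andP[e pa] ku hav.
have ka : key a <= K.
  case: (ce_key e) => [->//|[_ [sa [h|h]]]]; last by move: ku h; clear; lia.
  case: (ltnP (key u) K) => hk; first by move: hk h; clear; lia.
  have := hav a (mem_head _ _); rewrite (_ : K.+1 = key a) ?sa //; move: ku hk h; clear; lia.
move=> w; rewrite inE => /orP[/eqP->//|wp].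
by apply: IH pa ka _ w wp => w' w'p; apply: hav; rewrite inE w'p orbT.
Qed.

Lemma down_avoid p : forall u K, path ce u p -> K.+1 <= key u ->
  (forall w, w \in p -> ~~ isS w K) -> forall w, w \in p -> K.+1 <= key w.
Proof.
elim: p => // a p IH u K /= /andP[e pa] ku hav.
have ka : K.+1 <= key a.
  case: (ce_key e) => [->//|[_ [sa [h|h]]]]; first by move: ku h; clear; lia.
  case: (ltnP K.+1 (key u)) => hk; first by move: hk h; clear; lia.
  have := hav a (mem_head _ _); rewrite (_ : K = key a) ?sa //; move: ku hk h; clear; lia.
move=> w; rewrite inE => /orP[/eqP->//|wp].
by apply: IH pa ka _ w wp => w' w'p; apply: hav; rewrite inE w'p orbT.
Qed.

Lemma path_up p : forall u K, path ce u p -> uniq (u :: p) -> key u <= K ->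
  key (last u p) <= K -> forall w, w \in p -> key w <= K.
Proof.
elim: p => // a p IH u K /= /andP[e pa] /andP[up ua] ku kl.
have ka : key a <= K.
  case: (leqP (key a) K) => // Ka; exfalso.
  case: (ce_key e) => [h|[su [sa [h|h]]]]; try by move: ku Ka h; clear; lia.
  have kuK : key u = K by move: ku Ka h; clear; lia.
  have av : forall w, w \in p -> ~~ isS w K.
    move=> w wp; apply/negP => sw; move: up; rewrite inE negb_or => /andP[_].
    by rewrite (isS_eq (_ : isS u K) sw) ?wp // -kuK.
  have := mem_last a p; rewrite inE => /orP[/eqP hl|hl].
    by move: kl; rewrite hl; move: Ka; clear; lia.
  by have := down_avoid pa Ka av hl; move: kl => h1 h2; move: (leq_trans h2 h1); rewrite ltnn.
move=> w; rewrite inE => /orP[/eqP->//|wp].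
exact: IH pa ua ka kl w wp.
Qed.

Lemma path_down p : forall u K, path ce u p -> uniq (u :: p) -> K <= key u ->
  K <= key (last u p) -> forall w, w \in p -> K <= key w.
Proof.
elim: p => // a p IH u K /= /andP[e pa] /andP[up ua] ku kl.
have ka : K <= key a.
  case: (leqP K (key a)) => // Ka; exfalso.
  case: (ce_key e) => [h|[su [sa [h|h]]]]; try by move: ku Ka h; clear; lia.
  have kuK : key u = (key a).+1 by move: ku Ka h; clear; lia.
  have av : forall w, w \in p -> ~~ isS w (key a).+1.
    move=> w wp; apply/negP => sw; move: up; rewrite inE negb_or => /andP[_].
    by rewrite (isS_eq (_ : isS u (key a).+1) sw) ?wp // -kuK.
  have := mem_last a p; rewrite inE => /orP[/eqP hl|hl].
    by move: kl; rewrite hl; move: Ka; clear; lia.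
  have hh := up_avoid pa (leqnn _) av hl.
  by move: (leq_trans kl hh); rewrite leqNgt Ka.
move=> w; rewrite inE => /orP[/eqP->//|wp].
exact: IH pa ua ka kl w wp.
Qed.

Lemma path_leaf p : forall u d, path ce u p -> uniq (u :: p) -> inl d \in p ->
  last u p = inl d.
Proof.
elim: p => // a p IH u d /= /andP[e pa] /andP[up ua].
rewrite inE => /orP[/eqP ad|dp]; last by apply: IH pa ua dp.
subst a; case: p pa up {IH ua} => // b p /= /andP[e2 _].
case: u e => // j; case: b e2 => // j' /= /eqP e2 /eqP e1.
have -> : j = j' by apply: val_inj; rewrite /= -e1 -e2.
by rewrite !inE eqxx orbT.
Qed.

Lemma on_path_leaves (a b : 'I_(k.+4)) v : on_path ce (inl a) (inl b) v ->
  v = inl a \/ v = inl b \/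
  exists j : 'I_(k.+2), v = inr j /\ minn (cl a) (cl b) <= j <= maxn (cl a) (cl b).
Proof.
case=> p [hp hl hu]; rewrite inE => /orP[/eqP->|vp]; first by left.
right; case: v vp => [d|j] vp.
  by left; have := path_leaf hp hu vp; rewrite hl => ->.
right; exists j; split => //.
have h1 := path_down hp hu (geq_minl _ _) _ vp.
have h2 := path_up hp hu (leq_maxl _ _) _ vp.
rewrite hl /= in h1 h2.
by rewrite h1 ?geq_minr // h2 ?leq_maxr.
Qed.

Lemma med_leaves (a b c : 'I_(k.+4)) v : a < b -> b < c ->
  on_path ce (inl a) (inl b) v -> on_path ce (inl b) (inl c) v ->
  on_path ce (inl a) (inl c) v ->
  exists j : 'I_(k.+2), v = inr j /\ nat_of_ord j = cl b.
Proof.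
move=> ab bc h1 h2 h3.
have ne : forall (x y : 'I_(k.+4)), x < y -> inl x <> inl y :> CV.
  by move=> x y xy [] e; move: xy; rewrite e ltnn.
have ac : a < c := ltn_trans ab bc.
case: (on_path_leaves h1) => [e|[e|[j [e hj]]]]; subst v.
- case: (on_path_leaves h2) => [e|[e|[j [e _]]]] //.
    by case: (ne _ _ ab e).
  by case: (ne _ _ ac e).
- case: (on_path_leaves h3) => [e|[e|[j [e _]]]] //.
    by case: (ne _ _ ab (esym e)).
  by case: (ne _ _ bc e).
- exists j; split => //.
  case: (on_path_leaves h2) => [e|[e|[j' [[e] hj']]]] //.
  subst j'; rewrite /cl in hj hj' *; move: hj hj' ab bc; clear; lia.
Qed.

Lemma cl_lt (i : nat) : cl i < k.+2.
Proof. rewrite /cl; lia. Qed.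

Definition hub : CV := inr ord0.

Lemma conn_spine t (ht : t < k.+2) : connect ce (inr (Ordinal ht)) hub.
Proof.
elim: t ht => [|t IH] ht; first by rewrite (_ : Ordinal ht = ord0) //; apply: val_inj.
have ht' : t < k.+2 by lia.
apply: connect_trans (IH ht').
by apply: connect1 => /=; rewrite eqxx orbT.
Qed.

Lemma conn_hub v : connect ce v hub.
Proof.
case: v => [i|[j hj]]; last exact: conn_spine.
apply: connect_trans (conn_spine (cl_lt i)).
by apply: connect1 => /=.
Qed.

Lemma ce_connected : gconnected ce.
Proof.
move=> x y; apply: connect_trans (conn_hub x) _.
by rewrite (sym_connect_sym ce_sym); apply: conn_hub.
Qed.

Lemma seq_max (T : eqType) (f : T -> nat) (c : seq T) x0 : x0 \in c ->
  exists2 x, x \in c & forall w, w \in c -> f w <= f x.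
Proof.
elim: c x0 => // a c IH x0 _.
case: c IH => [|b c] IH.
  by exists a; rewrite ?inE // => w; rewrite inE => /eqP->.
have [x xc hx] := IH b (mem_head _ _).
case: (leqP (f a) (f x)) => h.
  exists x; first by rewrite inE xc orbT.
  by move=> w; rewrite inE => /orP[/eqP->//|]; apply: hx.
exists a; first exact: mem_head.
move=> w; rewrite inE => /orP[/eqP->//|/hx]; move: h; clear; lia.
Qed.

Lemma two_nbrs c x : cycle ce c -> uniq c -> 3 <= size c -> x \in c ->
  exists y z, [/\ y != z, y \in c, z \in c, ce x y & ce x z].
Proof.
move=> cc uc sc xc; case: (rot_to xc) => i s e.
have cc' : cycle ce (x :: s) by rewrite -e rot_cycle.
have uc' : uniq (x :: s) by rewrite -e rot_uniq.
have sc' : 3 <= size (x :: s) by rewrite -e size_rot.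
have mc : forall w, w \in x :: s -> w \in c by move=> w; rewrite -e mem_rot.
case: s cc' uc' sc' mc {e} => [|y [|b s]] //= cc' uc' _ mc.
move: cc'; rewrite rcons_path => /and3P[exy _ /andP[_ ezx]].
exists y, (last b s); split.
- move: uc'; rewrite !inE => /andP[_ /andP[]]; rewrite negb_or => /andP[yb ys] _.
  apply/negP => /eqP yl; have := mem_last b s; rewrite -yl inE (negbTE ys) orbF.
  by move=> /eqP h; move: yb; rewrite h eqxx.
- by apply: mc; rewrite !inE eqxx orbT.
- by apply: mc; have := mem_last b s; rewrite !inE => ->; rewrite !orbT.
- exact: exy.
- by rewrite ce_sym.
Qed.

Lemma ce_acyclic : acyclic ce.
Proof.
move=> c sc uc; apply/negP => cc.
have noleaf : forall d, inl d \notin c.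
  move=> d; apply/negP => dc.
  have [y [z [yz _ _ ey ez]]] := two_nbrs cc uc sc dc.
  case: y yz ey => // jy; case: z ez => // jz ez yz /= ey.
  by move: yz; rewrite (_ : jy = jz) ?eqxx //; apply: val_inj => /=; move: ey ez => /eqP ey /eqP ez; lia.
have c0 : c != [::] by case: c sc {uc cc noleaf}.
case: c c0 cc uc sc noleaf => // x0 c' _ cc uc sc noleaf.
have [x xc hx] := seq_max key (mem_head x0 c').
case: x xc hx => [d xc|j xc] hx; first by have := noleaf d; rewrite xc.
have [y [z [yz yc zc ey ez]]] := two_nbrs cc uc sc xc.
have hy := hx y yc; have hz := hx z zc.
case: y yz ey yc hy => [d|jy] yz ey yc hy; first by have := noleaf d; rewrite yc.
case: z yz ez zc hz => [d|jz] yz ez zc hz; first by have := noleaf d; rewrite zc.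
move: yz; rewrite (_ : jy = jz) ?eqxx //; apply: val_inj.
move: ey ez hy hz => /= /orP[] /eqP ey /orP[] /eqP ez hy hz; lia.
Qed.

Lemma card3 (T : finType) (a b c : T) : a != b -> a != c -> b != c -> #|[set a; b; c]| = 3.
Proof. move=> ab ac bc. by rewrite -setUA cardsU1 cards2 !inE negb_or ab ac bc. Qed.
Lemma inl_eq (a b : 'I_(k.+4)) : (inl a == inl b :> CV) = (val a == val b).
Proof. by []. Qed.
Lemma inr_eq (a b : 'I_(k.+2)) : (inr a == inr b :> CV) = (val a == val b).
Proof. by []. Qed.
Lemma lr_eq (a : 'I_(k.+4)) (b : 'I_(k.+2)) : (inl a == inr b :> CV) = false.
Proof. by []. Qed.
Lemma rl_eq (a : 'I_(k.+4)) (b : 'I_(k.+2)) : (inr b == inl a :> CV) = false.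
Proof. by []. Qed.

Lemma deg_inl i : deg ce (inl i) = 1.
Proof.
rewrite /deg (_ : [set w | ce (inl i) w] = [set inr (inord (cl i))]) ?cards1 //.
apply/setP => w; rewrite !inE; case: w => [i'|j]; rewrite ?inr_eq ?rl_eq //=.
rewrite inordK; last exact: cl_lt.
by rewrite eq_sym.
Qed.

Lemma deg_inr j : deg ce (inr j) = 3.
Proof.
case: j => j hj; rewrite /deg.
have [j0|jn0] := eqVneq j 0.
  rewrite (_ : [set w | ce (inr (Ordinal hj)) w] =
     [set inl (inord 0); inl (inord 1); inr (inord 1)]).
    by rewrite card3 //; rewrite ?inl_eq ?inr_eq ?lr_eq //=; rewrite !inordK //; lia.
  apply/setP => w; rewrite !inE; case: w => [i|j']; [have := ltn_ord i | have := ltn_ord j'];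
    rewrite ?inl_eq ?inr_eq ?lr_eq ?rl_eq /= ?orbF ?orFb !inordK /cl; try lia.
have [jk|jnk] := eqVneq j k.+1.
  rewrite (_ : [set w | ce (inr (Ordinal hj)) w] =
     [set inl (inord k.+2); inl (inord k.+3); inr (inord k)]).
    by rewrite card3 //; rewrite ?inl_eq ?inr_eq ?lr_eq //=; rewrite !inordK //; lia.
  apply/setP => w; rewrite !inE; case: w => [i|j']; [have := ltn_ord i | have := ltn_ord j'];
    rewrite ?inl_eq ?inr_eq ?lr_eq ?rl_eq /= ?orbF ?orFb !inordK /cl; try lia.
rewrite (_ : [set w | ce (inr (Ordinal hj)) w] =
   [set inl (inord j.+1); inr (inord j.-1); inr (inord j.+1)]).
  by rewrite card3 //; rewrite ?inl_eq ?inr_eq ?lr_eq //=; rewrite !inordK //; lia.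
apply/setP => w; rewrite !inE; case: w => [i|j']; [have := ltn_ord i | have := ltn_ord j'];
  rewrite ?inl_eq ?inr_eq ?lr_eq ?rl_eq /= ?orbF ?orFb !inordK /cl; try lia.
Qed.

Lemma leaf_inl i : is_leaf ce (inl i).
Proof. by rewrite /is_leaf deg_inl. Qed.
Lemma leaf_inr j : is_leaf ce (inr j) = false.
Proof. by rewrite /is_leaf deg_inr. Qed.

Lemma ord_inord (x : 'I_(k.+4)) t : (x : nat) == t -> x = inord t.
Proof. by move=> /eqP e; apply: val_inj; rewrite /= inordK -e ?ltn_ord. Qed.

Lemma cherries_le2 : #|cherries ce| <= 2.
Proof.
apply: (@leq_trans #|[set [set inl (inord 0); inl (inord 1)] ;
                     [set inl (inord k.+2); inl (inord k.+3)]] : {set {set CV}}|);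
  last by rewrite cards2 ltnS leq_b1.
apply: subset_leq_card; apply/subsetP => C; rewrite inE.
move=> /existsP [a /existsP [b /and5P [/eqP -> ab la lb /existsP [w /andP [ea eb]]]]].
case: a ab la ea => [ia|ja] ab la ea; last by rewrite leaf_inr in la.
case: b ab lb eb => [ib|jb] ab lb eb; last by rewrite leaf_inr in lb.
case: w ea eb => // jw /= /eqP ea /eqP eb.
rewrite inl_eq /= in ab.
have hia := ltn_ord ia; have hib := ltn_ord ib.
have : ((ia == 0 :> nat) && (ib == 1 :> nat)) || ((ia == 1 :> nat) && (ib == 0 :> nat)) ||
  ((ia == k.+2 :> nat) && (ib == k.+3 :> nat)) || ((ia == k.+3 :> nat) && (ib == k.+2 :> nat)).
  by move: ea eb ab hia hib; rewrite /cl; clear; lia.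
rewrite !inE.
case/orP => [/orP [/orP [|]|]|] /andP [/ord_inord -> /ord_inord ->].
- by rewrite eqxx.
- by rewrite setUC eqxx.
- by rewrite eqxx orbT.
- by rewrite setUC eqxx orbT.
Qed.

End Cat.

Section Main.
Variables (X : finType) (k : nat) (r : X -> nat).
Hypothesis ir : injective r.
Hypothesis hk : #|X| = k.+4.

Definition pos (z : X) : nat := #|[set w | r w < r z]|.

Lemma pos_lt z : pos z < k.+4.
Proof.
rewrite -hk -cardsT; apply: proper_card; apply/properP; split; first exact: subsetT.
by exists z; rewrite !inE ?ltnn.
Qed.

Lemma pos_mono a b : r a < r b -> pos a < pos b.
Proof.
move=> ab; apply: proper_card; apply/properP; split.
  by apply/subsetP => w; rewrite !inE => h; apply: ltn_trans h ab.
by exists a; rewrite !inE ?ltnn.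
Qed.

Lemma pos_inj : injective pos.
Proof.
move=> a b e; apply: contraTeq (eqxx (pos a)) => ab.
have : r a != r b by apply: contra ab => /eqP /ir ->.
rewrite neq_ltn => /orP[] /pos_mono; rewrite e ?ltnn //.
Qed.

Definition lab (z : X) : CV k := inl (inord (pos z)).

Lemma lab_val z : (inord (pos z) : 'I_(k.+4)) = pos z :> nat.
Proof. by rewrite inordK // pos_lt. Qed.

Lemma lab_inj : injective lab.
Proof.
move=> a b [] e; apply: pos_inj; by rewrite -lab_val e lab_val.
Qed.

Lemma med_vertex (s : {set X}) m v : #|s| = 3 -> m \in s ->
  #|[set w in s | r w < r m]| = 1 -> is_med (@ce k) lab s v ->
  0 < pos m < k.+3 /\ exists j : 'I_(k.+2), v = inr j /\ nat_of_ord j = cl k (pos m).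
Proof.
move=> s3 ms c1 hmed.
case/cards1P: (introT eqP c1) => l el.
have : l \in [set w in s | r w < r m] by rewrite el inE.
rewrite inE => /andP[ls lm].
have e1 := cardsD1 l s; rewrite ls s3 in e1.
have ml : m \in s :\ l by rewrite in_setD1 ms andbT; apply: contraTneq lm => ->; rewrite ltnn.
have e2 := cardsD1 m (s :\ l); rewrite ml in e2.
have : 0 < #|s :\ l :\ m| by move: e1 e2; clear; lia.
case/card_gt0P => h; rewrite !in_setD1 => /and3P[hm hl hs].
have mh : r m < r h.
  case: (ltngtP (r m) (r h)) => // [hlt|/ir e]; last by rewrite e eqxx in hm.
  have : h \in [set w in s | r w < r m] by rewrite inE hs hlt.
  by rewrite el inE (negbTE hl).
have plm := pos_mono lm; have pmh := pos_mono mh.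
have lmn : l != m by apply: contraTneq lm => ->; rewrite ltnn.
have mhn : m != h by rewrite eq_sym.
have lhn : l != h by rewrite eq_sym.
have pmk := pos_lt h.
split; first by move: plm pmh pmk; clear; lia.
have ab : (inord (pos l) : 'I_(k.+4)) < (inord (pos m) : 'I_(k.+4)) by rewrite !lab_val.
have bc : (inord (pos m) : 'I_(k.+4)) < (inord (pos h) : 'I_(k.+4)) by rewrite !lab_val.
have := med_leaves ab bc (hmed _ _ ls ms lmn) (hmed _ _ ms hs mhn) (hmed _ _ ls hs lhn).
by rewrite lab_val.
Qed.

End Main.

Theorem theorem2 (X : finType) (tau : {set {set X}}) :
  4 <= #|X| -> triples tau -> tau != set0 -> thin tau ->
  exists (V : finType) (e : rel V) (lab : X -> V),
    caterpillar e lab /\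
    (forall s1 s2 v, s1 \in tau -> s2 \in tau ->
       is_med e lab s1 v -> is_med e lab s2 v -> s1 = s2).
Proof.
move=> h4 htr hne hthin.
have [k hk] : exists k, #|X| = k.+4 by exists (#|X| - 4); lia.
have : 0 < #|X| by lia.
case/card_gt0P => x0 _.
pose F := fun s : {set X} => s.
have hC : Cond F tau.
  split; first by move=> i iS; rewrite /F (htr i iS).
  move=> J sJ nJ; have := hthin J sJ nJ.
  have -> : alltri F J by apply/forall_inP => i iJ; rewrite /F (htr i (subsetP sJ i iJ)).
  have -> : LL F J = Lset J by [].
  by move=> h; apply: leq_trans h; rewrite /nat_of_bool addn1 addn2.
have [r [ir [md [hv hinj]]]] := order_exists x0 (leqnn _) hC.
have linj : injective (fun z => (inord (pos r z) : 'I_(k.+4))).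
  by move=> a b e; apply: (lab_inj ir hk); rewrite /lab e.
exists (CV k), (@ce k), (@lab X k r); split.
  split; last exact: cherries_le2.
  split; last by case=> [i|j]; rewrite ?leaf_inl // => _; rewrite deg_inr.
  split.
  - split; [split; [exact: ce_sym | exact: ce_irr] | exact: ce_connected | exact: ce_acyclic].
  - exact: lab_inj ir hk.
  - case=> [i|j].
      rewrite leaf_inl; symmetry; apply/existsP.
      have := inj_card_onto linj (_ : #|'I_(k.+4)| <= #|X|) i.
      case/(_ _)/codomP => [|x ->]; first by rewrite card_ord hk.
      by exists x.
    by rewrite leaf_inr; symmetry; apply/existsP => [[x]].
  - by case=> [i|j]; rewrite ?leaf_inl // => _; rewrite deg_inr.
move=> s1 s2 v h1 h2 m1 m2.
have [c1 c2] := hv s1 h1; have [d1 d2] := hv s2 h2.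
have [p1 [j1 [e1 f1]]] := med_vertex ir hk (htr s1 h1) c1 c2 m1.
have [p2 [j2 [e2 f2]]] := med_vertex ir hk (htr s2 h2) d1 d2 m2.
rewrite e1 in e2; case: e2 => e; subst j2.
have ep : pos r (md s1) = pos r (md s2) by move: f1 f2 p1 p2; rewrite /cl; clear; lia.
by apply: hinj => //; apply: (pos_inj ir ep).
Qed.
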